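(* Let $IS\in\{\Box,\blacksquare\}^2$ and let $\tau$ be a correct compositional translation from $\mathrm{SYNCSIMPLE}$ into $\mathrm{LOCKSIMPLE}_{2,IS}$ of blocking type $(P_1P_1,P_2P_2)$. Then: (1) the blocking prefix of $\tau(!)$ has the form $R_1P_1wT_2P_1$ with $w\in\{P_2,T_2\}^*$ and $R_1$ some word, and the blocking prefix of $\tau(?)$ has the form $R_3P_2w'T_1P_2$ with $w'\in\{P_1,T_1\}^*$ and $R_3$ some word; (2) $\tau(!)$ has a prefix in $\{T_1,P_1\}^*T_2$, and $\tau(?)$ has a prefix in $\{T_2,P_2\}^*T_1$.
   Context: $\mathrm{SYNCSIMPLE}$: subprocesses $\mathcal{U} ::= \checkmark \mid 0 \mid\, !\mathcal{U} \mid\, ?\mathcal{U}$; processes are finite parallel compositions ($\mid$ associative, commutative, $0$ a unit). Reduction: $!\mathcal{U}_1\mid ?\mathcal{U}_2\mid \mathcal{P}\to \mathcal{U}_1\mid\mathcal{U}_2\mid\mathcal{P}$. Successful: of form $\checkmark\mid\mathcal{P}$; may-convergent: reduces to a successful process; must-convergent: every reachable process is may-convergent. $\mathrm{LOCKSIMPLE}_{k,IS}$ ($IS\in\{\Box,\blacksquare\}^k$, $\Box$ empty, $\blacksquare$ full): subprocesses are words over $\{P_1,T_1,\dots,P_k,T_k\}$ followed by $0$ or $\checkmark$; states $(\mathcal{P},C)$ reduce by $(P_i\mathcal{U}\mid\mathcal{P},C)\to(\mathcal{U}\mid\mathcal{P},C[C_i:=\blacksquare])$ only if $C_i=\Box$,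 and $(T_i\mathcal{U}\mid\mathcal{P},C)\to(\mathcal{U}\mid\mathcal{P},C[C_i:=\Box])$ always. Success = process contains $\checkmark$; a process $\mathcal{P}$ is may/must-convergent iff the state $(\mathcal{P},IS)$ is. A compositional translation $\tau$ is given by words $\tau(!),\tau(?)$ with $\tau(0)=0$, $\tau(\checkmark)=\checkmark$, $\tau(!\mathcal{U})=\tau(!)\tau(\mathcal{U})$, $\tau(?\mathcal{U})=\tau(?)\tau(\mathcal{U})$, $\tau$ commuting with $\mid$; correct = preserves and reflects may- and must-convergence. Blocking prefix/type of a word $S$: execute $S$ alone as a single subprocess from store $IS$; if it gets stuck at an occurrence of $P_i$, the prefix ending with that occurrence is the blocking prefix; the type is $P_i$ if this occurrence is the first symbol from $\{P_i,T_i\}$ in $S$, and $P_iP_i$ otherwise (then the blocking prefix has form $R_1P_iR_2P_i$ with $R_2$ containing no $P_i,T_i$). $\tau$ has blocking type $(W_1,W_2)$ if $\tau(!)$ has type $W_1$ and $\tau(?)$ type $W_2$. $X^*$ denotes finite words over a symbol set $X$. *)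

(* Defs.v *)
From Stdlib Require Import List Permutation Relations.
Import ListNotations.

(* An action: true = "!" , false = "?". *)
(* A subprocess  a_1 ... a_n e  with e = true for a final checkmark, false for 0. *)
Definition ssub : Type := (list bool * bool)%type.
Definition sproc : Type := list ssub.   (* parallel composition, up to permutation *)

Inductive sstep : sproc -> sproc -> Prop :=
| sstep_comm : forall (P : sproc) u1 e1 u2 e2 Q,
    Permutation P ((true :: u1, e1) :: (false :: u2, e2) :: Q) ->
    sstep P ((u1, e1) :: (u2, e2) :: Q).

Definition ssuccessful (P : sproc) : Prop := In (@nil bool, true) P.

Definition smay (P : sproc) : Prop :=
  exists P', clos_refl_trans sproc sstep P P' /\ ssuccessful P'.

Definition smust (P : sproc) : Prop :=
  forall P', clos_refl_trans sproc sstep P P' -> smay P'.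

Inductive lock : Type := L1 | L2.

Definition lock_eqb (i j : lock) : bool :=
  match i, j with L1, L1 | L2, L2 => true | _, _ => false end.

(* P i = take lock i, T i = release lock i *)
Inductive sym : Type := P (i : lock) | T (i : lock).

Definition word : Type := list sym.

(* store: C i = true means the lock i is full (black square), false = empty *)
Definition store : Type := lock -> bool.

Definition upd (C : store) (i : lock) (b : bool) : store :=
  fun j => if lock_eqb j i then b else C j.

Definition lsub : Type := (word * bool)%type.  (* e = true : checkmark, false : 0 *)
Definition lproc : Type := list lsub.
Definition lstate : Type := (lproc * store)%type.

Inductive lstep : lstate -> lstate -> Prop :=
| lstep_P : forall (Pr : lproc) (C : store) i u e Q,
    Permutation Pr ((P i :: u, e) :: Q) -> C i = false ->
    lstep (Pr, C) ((u, e) :: Q, upd C i true)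
| lstep_T : forall (Pr : lproc) (C : store) i u e Q,
    Permutation Pr ((T i :: u, e) :: Q) ->
    lstep (Pr, C) ((u, e) :: Q, upd C i false).

Definition lsuccessful (s : lstate) : Prop := In (@nil sym, true) (fst s).

Definition lmay_state (s : lstate) : Prop :=
  exists s', clos_refl_trans lstate lstep s s' /\ lsuccessful s'.

Definition lmust_state (s : lstate) : Prop :=
  forall s', clos_refl_trans lstate lstep s s' -> lmay_state s'.

Definition lmay (IS : store) (Pr : lproc) : Prop := lmay_state (Pr, IS).
Definition lmust (IS : store) (Pr : lproc) : Prop := lmust_state (Pr, IS).

(* tau is given by the two words tau(!) = a and tau(?) = b. *)
Definition tr_sub (a b : word) (U : ssub) : lsub :=
  (flat_map (fun x : bool => if x then a else b) (fst U), snd U).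

Definition tr_proc (a b : word) (Pr : sproc) : lproc := map (tr_sub a b) Pr.

Definition correct (IS : store) (a b : word) : Prop :=
  forall Pr : sproc,
    (smay Pr <-> lmay IS (tr_proc a b Pr)) /\
    (smust Pr <-> lmust IS (tr_proc a b Pr)).

(* Executing a word alone as a single subprocess; None = gets stuck. *)
Fixpoint exec (C : store) (s : word) : option store :=
  match s with
  | [] => Some C
  | P i :: s' => if C i then None else exec (upd C i true) s'
  | T i :: s' => exec (upd C i false) s'
  end.

Definition mentions (i : lock) (x : sym) : bool :=
  match x with P j | T j => lock_eqb i j end.

Definition blocking_prefix (IS : store) (S B : word) : Prop :=
  exists B' i rest C,
    S = B' ++ P i :: rest /\ B = B' ++ [P i] /\
    exec IS B' = Some C /\ C i = true.

(* Blocking types: Single i = "P_i",  Double i = "P_i P_i" *)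
Inductive btype : Type := Single (i : lock) | Double (i : lock).

Definition has_blocking_type (IS : store) (S : word) (t : btype) : Prop :=
  exists B' i rest C,
    S = B' ++ P i :: rest /\ exec IS B' = Some C /\ C i = true /\
    match t with
    | Single j => j = i /\ forallb (fun x => negb (mentions i x)) B' = true
    | Double j => j = i /\ existsb (mentions i) B' = true
    end.

Definition word_over (i : lock) (w : word) : Prop :=
  forall x, In x w -> mentions i x = true.

(* Main.v *)
Require Import Defs.
From Stdlib Require Import List Permutation Relations.
Import ListNotations.

Definition nomention (i : lock) (w : word) : Prop :=
  forallb (fun x => negb (mentions i x)) w = true.

Definition stuck (w : word) (C : store) : Prop :=
  exists k w', w = P k :: w' /\ C k = true.

Definition reach2 (L0 : lproc) (IS : store) (e1 e2 : bool) (u v : word) (C : store) : Prop :=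
  exists L, Permutation L [(u,e1);(v,e2)] /\ clos_refl_trans lstate lstep (L0,IS) (L,C).

Lemma two_locks : forall k i j : lock, i <> j -> k <> i -> k = j.
Proof. intros [] [] [] H1 H2; congruence. Qed.

Lemma other_mention : forall i j s, i <> j -> mentions i s = false -> mentions j s = true.
Proof. intros [] [] [] H1 H2; try destruct i; simpl in *; congruence. Qed.

Lemma exec_app : forall w1 w2 C,
  exec C (w1 ++ w2) = match exec C w1 with Some C' => exec C' w2 | None => None end.
Proof.
  induction w1 as [|s w1 IH]; intros w2 C; simpl; auto.
  destruct s as [k|k]; [destruct (C k)|]; auto.
Qed.

Lemma exec_noi : forall i w C C', nomention i w -> exec C w = Some C' -> C' i = C i.
Proof.
  unfold nomention. intros i; induction w as [|s w IH]; intros C C' Hn He; simpl in *.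
  - congruence.
  - apply andb_prop in Hn as [H1 H2].
    destruct s as [k|k]; simpl in H1.
    + destruct (C k); [discriminate|].
      rewrite (IH _ _ H2 He). unfold upd. destruct (lock_eqb i k); simpl in *; congruence.
    + rewrite (IH _ _ H2 He). unfold upd. destruct (lock_eqb i k); simpl in *; congruence.
Qed.

Lemma upd_same : forall C i b, upd C i b i = b.
Proof. intros C [] b; reflexivity. Qed.

Lemma upd_other : forall C i j b, i <> j -> upd C i b j = C j.
Proof. intros C [] [] b H; unfold upd; simpl; congruence. Qed.

Lemma reach_swap : forall L0 IS e1 e2 u v C,
  reach2 L0 IS e1 e2 u v C -> reach2 L0 IS e2 e1 v u C.
Proof.
  intros L0 IS e1 e2 u v C [L [HP HR]]. exists L. split; auto.
  eapply Permutation_trans; [exact HP|]. apply perm_swap.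
Qed.

Lemma reach_P : forall L0 IS e1 e2 k u v C,
  reach2 L0 IS e1 e2 (P k :: u) v C -> C k = false ->
  reach2 L0 IS e1 e2 u v (upd C k true).
Proof.
  intros L0 IS e1 e2 k u v C [L [HP HR]] Hk.
  exists [(u,e1);(v,e2)]. split; [apply Permutation_refl|].
  eapply rt_trans; [exact HR|]. apply rt_step.
  eapply lstep_P; [exact HP|exact Hk].
Qed.

Lemma reach_T : forall L0 IS e1 e2 k u v C,
  reach2 L0 IS e1 e2 (T k :: u) v C ->
  reach2 L0 IS e1 e2 u v (upd C k false).
Proof.
  intros L0 IS e1 e2 k u v C [L [HP HR]].
  exists [(u,e1);(v,e2)]. split; [apply Permutation_refl|].
  eapply rt_trans; [exact HR|]. apply rt_step.
  eapply lstep_T; exact HP.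
Qed.

Lemma reach_exec : forall L0 IS e1 e2 w z v C C',
  exec C w = Some C' -> reach2 L0 IS e1 e2 (w ++ z) v C -> reach2 L0 IS e1 e2 z v C'.
Proof.
  induction w as [|s w IH]; intros z v C C' He Hr; simpl in *.
  - congruence.
  - destruct s as [k|k].
    + destruct (C k) eqn:Ek; [discriminate|].
      eapply IH; [exact He|]. apply reach_P; auto.
    + eapply IH; [exact He|]. apply reach_T; auto.
Qed.

Lemma run_prefix : forall w C,
  (exists C', exec C w = Some C') \/
  (exists w1 k w2 C1, w = w1 ++ P k :: w2 /\ exec C w1 = Some C1 /\ C1 k = true).
Proof.
  induction w as [|s w IH]; intros C; simpl.
  - left; eauto.
  - destruct s as [k|k].
    + destruct (C k) eqn:Ek.
      * right. exists [], k, w, C. simpl. auto.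
      * destruct (IH (upd C k true)) as [H|[w1 [k' [w2 [C1 [H1 [H2 H3]]]]]]]; [left; exact H|].
        right. exists (P k :: w1), k', w2, C1. subst. simpl. rewrite Ek. auto.
    + destruct (IH (upd C k false)) as [H|[w1 [k' [w2 [C1 [H1 [H2 H3]]]]]]]; [left; exact H|].
      right. exists (T k :: w1), k', w2, C1. subst. simpl. auto.
Qed.

Lemma y_blocks : forall L0 IS e1 e2 j Y1 Y2 r u D,
  nomention j Y2 ->
  reach2 L0 IS e1 e2 u (Y1 ++ P j :: Y2 ++ P j :: r) D ->
  exists y' D', reach2 L0 IS e1 e2 u y' D' /\ stuck y' D'.
Proof.
  intros L0 IS e1 e2 j Y1 Y2 r u D Hn Hr.
  apply reach_swap in Hr.
  destruct (run_prefix Y1 D) as [[C' HC]|[w1 [k [w2 [C1 [H1 [H2 H3]]]]]]].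
  - pose proof (reach_exec _ _ _ _ _ _ _ _ _ HC Hr) as Hr1.
    destruct (C' j) eqn:Ej.
    + exists (P j :: Y2 ++ P j :: r), C'. split; [apply reach_swap; auto|].
      exists j, (Y2 ++ P j :: r). auto.
    + apply reach_P in Hr1; auto.
      destruct (run_prefix Y2 (upd C' j true)) as [[C2 HC2]|[v1 [k [v2 [C1 [G1 [G2 G3]]]]]]].
      * pose proof (reach_exec _ _ _ _ _ _ _ _ _ HC2 Hr1) as Hr2.
        exists (P j :: r), C2. split; [apply reach_swap; auto|].
        exists j, r. split; auto. rewrite (exec_noi _ _ _ _ Hn HC2). apply upd_same.
      * subst Y2. rewrite <- app_assoc in Hr1. simpl in Hr1.
        pose proof (reach_exec _ _ _ _ _ _ _ _ _ G2 Hr1) as Hr2.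
        eexists _, C1. split; [apply reach_swap; exact Hr2|].
        eexists _, _. split; [reflexivity|auto].
  - subst Y1. rewrite <- app_assoc in Hr. simpl in Hr.
    pose proof (reach_exec _ _ _ _ _ _ _ _ _ H2 Hr) as Hr2.
    eexists _, C1. split; [apply reach_swap; exact Hr2|].
    eexists _, _. split; [reflexivity|auto].
Qed.

Lemma nomention_app : forall i l1 l2, nomention i (l1 ++ l2) <-> nomention i l1 /\ nomention i l2.
Proof.
  unfold nomention. intros. rewrite forallb_app. split.
  - intros H; apply andb_prop in H; tauto.
  - intros [H1 H2]; rewrite H1, H2; reflexivity.
Qed.

Lemma first_mention : forall j l,
  nomention j l \/ exists l1 s l2, l = l1 ++ s :: l2 /\ nomention j l1 /\ mentions j s = true.
Proof.
  unfold nomention. intros j; induction l as [|s l IH]; simpl.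
  - left; reflexivity.
  - destruct (mentions j s) eqn:E.
    + right. exists [], s, l. simpl. auto.
    + destruct IH as [H|[l1 [s' [l2 [H1 [H2 H3]]]]]].
      * left; exact H.
      * right. exists (s :: l1), s', l2. subst. simpl. rewrite E. auto.
Qed.

Lemma last_mention : forall i l, existsb (mentions i) l = true ->
  exists l1 s l2, l = l1 ++ s :: l2 /\ mentions i s = true /\ nomention i l2.
Proof.
  intros i l. induction l as [|x l IH] using rev_ind; simpl; intros H.
  - discriminate.
  - rewrite existsb_app in H. simpl in H.
    destruct (mentions i x) eqn:E.
    + exists l, x, []. repeat split; auto.
    + rewrite Bool.orb_false_r in H. destruct (IH H) as [l1 [s [l2 [H1 [H2 H3]]]]].
      exists l1, s, (l2 ++ [x]). subst. rewrite <- app_assoc. repeat split; auto.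
      apply nomention_app. split; auto. unfold nomention; simpl; rewrite E; reflexivity.
Qed.

Lemma mentions_cases : forall i s, mentions i s = true -> s = P i \/ s = T i.
Proof. intros [] [[]|[]] H; simpl in H; try discriminate; auto. Qed.

Lemma decomp : forall IS w i, has_blocking_type IS w (Double i) ->
  exists X1 X2 rest C, w = X1 ++ P i :: X2 ++ P i :: rest /\
    exec IS (X1 ++ P i :: X2) = Some C /\ C i = true /\ nomention i X2.
Proof.
  intros IS w i [B' [i' [rest [C [H1 [H2 [H3 [H4 H5]]]]]]]]. subst i'.
  destruct (last_mention _ _ H5) as [l1 [s [l2 [G1 [G2 G3]]]]]. subst B'.
  destruct (mentions_cases _ _ G2) as [->| ->].
  - exists l1, l2, rest, C. subst w. rewrite <- app_assoc. simpl. auto.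
  - exfalso. rewrite exec_app in H2. destruct (exec IS l1) as [D|] eqn:ED; [|discriminate].
    simpl in H2. rewrite (exec_noi _ _ _ _ G3 H2) in H3. rewrite upd_same in H3. discriminate.
Qed.

Lemma core : forall L0 IS e1 e2 x y i j,
  i <> j ->
  reach2 L0 IS e1 e2 x y IS ->
  (forall u v C, reach2 L0 IS e1 e2 u v C -> stuck u C -> stuck v C -> False) ->
  forall X1 X2 rest C, x = X1 ++ P i :: X2 ++ P i :: rest ->
    exec IS (X1 ++ P i :: X2) = Some C -> nomention i X2 ->
  forall Y1 Y2 r E, y = Y1 ++ P j :: Y2 ++ P j :: r ->
    exec IS (Y1 ++ P j :: Y2) = Some E -> E j = true -> nomention j Y2 ->
  (exists w, X2 = w ++ [T j]) /\ (exists u rest, nomention j u /\ x = u ++ T j :: rest).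
Proof.
  intros L0 IS e1 e2 x y i j Hij Hst ND X1 X2 rest C Hx HC Hn2 Y1 Y2 r E Hy HE HEj Hm2.
  assert (P1 : exists w, X2 = w ++ [T j]).
  { rewrite exec_app in HC. destruct (exec IS X1) as [D|] eqn:ED; [|discriminate].
    simpl in HC. destruct (D i) eqn:EDi; [discriminate|].
    assert (Hr : reach2 L0 IS e1 e2 (P i :: X2 ++ P i :: rest) y D).
    { eapply reach_exec; [exact ED|]. rewrite <- Hx. exact Hst. }
    rewrite Hy in Hr.
    destruct (y_blocks _ _ _ _ _ _ _ _ _ _ Hm2 Hr) as [y' [D' [Hr' [k [y'' [Hy' Hk]]]]]].
    destruct (D' i) eqn:EDi'.
    { exfalso. eapply ND; [exact Hr'| |exists k, y''; auto]. eexists _,_; split; [reflexivity|auto]. }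
    assert (Hkj : k = j). { apply (two_locks k i j Hij). intro; subst; congruence. }
    subst k y'.
    apply reach_P in Hr'; auto.
    set (D'' := upd D' i true) in Hr'.
    assert (HDi : D'' i = true) by apply upd_same.
    assert (HDj : D'' j = true) by (unfold D''; rewrite upd_other; auto).
    destruct X2 as [|s w] using rev_ind.
    - exfalso. simpl in Hr'. eapply ND; [exact Hr'| |]; eexists _,_; split; try reflexivity; auto.
    - clear IHw. apply nomention_app in Hn2 as [Hnw Hns].
      unfold nomention in Hns; simpl in Hns. rewrite Bool.andb_true_r in Hns.
      destruct s as [k|k].
      + assert (Hk2 : k = j). { apply (two_locks k i j Hij). intro Hki; subst k.
          simpl in Hns. destruct i; discriminate. }
        subst k. exfalso.
        rewrite <- app_assoc in Hr'. simpl in Hr'.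
        destruct (run_prefix w D'') as [[C' HC']|[w1 [k [w2 [C1 [H1 [H2 H3]]]]]]].
        * pose proof (reach_exec _ _ _ _ _ _ _ _ _ HC' Hr') as Hr2.
          assert (HCi : C' i = true) by (rewrite (exec_noi _ _ _ _ Hnw HC'); auto).
          destruct (C' j) eqn:ECj.
          -- eapply ND; [exact Hr2| |]; eexists _,_; split; try reflexivity; auto.
          -- apply reach_P in Hr2; auto.
             eapply ND; [exact Hr2| |]; eexists _,_; split; try reflexivity.
             ++ rewrite upd_other; auto.
             ++ apply upd_same.
        * subst w. apply nomention_app in Hnw as [Hnw1 Hnw2].
          rewrite <- app_assoc in Hr'. simpl in Hr'.
          pose proof (reach_exec _ _ _ _ _ _ _ _ _ H2 Hr') as Hr2.
          assert (Hk3 : k = j). { apply (two_locks k i j Hij). intro Hki; subst k.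
            unfold nomention in Hnw2; simpl in Hnw2.
            destruct i; discriminate. }
          subst k.
          eapply ND; [exact Hr2| |]; eexists _,_; split; try reflexivity; auto.
      + assert (Hk4 : k = j). { apply (two_locks k i j Hij). intro Hki; subst k.
          simpl in Hns. destruct i; discriminate. }
        subst k. eauto. }
  split; [exact P1|].
  destruct P1 as [w Hw].
  destruct (first_mention j x) as [H|[l1 [s [l2 [H1 [H2 H3]]]]]].
  - exfalso. assert (HI : In (T j) x).
    { rewrite Hx, Hw. apply in_or_app. right. right. apply in_or_app. left.
      apply in_or_app. right. left. reflexivity. }
    unfold nomention in H. rewrite forallb_forall in H. specialize (H _ HI).
    destruct j; discriminate.
  - destruct (mentions_cases _ _ H3) as [->| ->]; [|eauto].
    exfalso.
    assert (Hr : reach2 L0 IS e1 e2 x (P j :: r) E).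
    { apply reach_swap. apply (reach_exec _ _ _ _ (Y1 ++ P j :: Y2) _ _ IS); [exact HE|].
      rewrite <- app_assoc. simpl. rewrite <- Hy. apply reach_swap; exact Hst. }
    rewrite H1 in Hr.
    destruct (run_prefix l1 E) as [[C' HC']|[w1 [k [w2 [C1 [G1 [G2 G3]]]]]]].
    + pose proof (reach_exec _ _ _ _ _ _ _ _ _ HC' Hr) as Hr2.
      assert (Hj : C' j = true) by (rewrite (exec_noi _ _ _ _ H2 HC'); auto).
      eapply ND; [exact Hr2| |]; eexists _,_; split; try reflexivity; auto.
    + subst l1. apply nomention_app in H2 as [H2a H2b].
      rewrite <- app_assoc in Hr. simpl in Hr.
      pose proof (reach_exec _ _ _ _ _ _ _ _ _ G2 Hr) as Hr2.
      assert (Hj : C1 j = true) by (rewrite (exec_noi _ _ _ _ H2a G2); auto).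
      eapply ND; [exact Hr2| |]; eexists _,_; split; try reflexivity; auto.
Qed.

Lemma bp_unique : forall B1 B2 k1 k2 r1 r2 C0 C1 C2,
  B1 ++ P k1 :: r1 = B2 ++ P k2 :: r2 -> exec C0 B1 = Some C1 -> C1 k1 = true ->
  exec C0 B2 = Some C2 -> C2 k2 = true -> B1 = B2.
Proof.
  induction B1 as [|s B1 IH]; intros B2 k1 k2 r1 r2 C0 C1 C2 Heq H1 H1k H2 H2k.
  - destruct B2 as [|s' B2]; auto. simpl in *. injection Heq as Hs _. subst s'.
    injection H1 as ->. rewrite H1k in H2. discriminate.
  - destruct B2 as [|s' B2]; simpl in *.
    + injection Heq as Hs _. subst s. injection H2 as ->. rewrite H2k in H1. discriminate.
    + injection Heq as Hs Heq. subst s'. f_equal.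
      destruct s as [k|k].
      * destruct (C0 k); [discriminate|]. eapply IH; eauto.
      * eapply IH; eauto.
Qed.

Definition Pr0 : sproc := [([true],true);([false],false)].

Lemma smust_Pr0 : smust Pr0.
Proof.
  assert (Inv : forall P', clos_refl_trans sproc sstep Pr0 P' ->
            Permutation P' Pr0 \/ In (@nil bool, true) P').
  { intros P' H. apply clos_rt_rt1n in H.
    enough (G : forall A B, clos_refl_trans_1n sproc sstep A B ->
              (Permutation A Pr0 \/ In (@nil bool, true) A) ->
              Permutation B Pr0 \/ In (@nil bool, true) B).
    { apply (G _ _ H). left; apply Permutation_refl. }
    intros A B HAB. induction HAB as [A|A A' B Hs _ IH]; auto.
    intros HA. apply IH. destruct Hs as [A0 u1 e1 u2 e2 Q HP].
    destruct HA as [HA|HA].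
    - right. assert (HI : In (true :: u1, e1) Pr0).
      { eapply Permutation_in; [eapply Permutation_trans; [apply Permutation_sym; exact HP|exact HA]|].
        left; reflexivity. }
      simpl in HI. destruct HI as [HI|[HI|[]]]; inversion HI; subst. left; reflexivity.
    - right. apply (Permutation_in _ HP) in HA.
      destruct HA as [HA|[HA|HA]]; try discriminate. right; right; exact HA. }
  intros P' HR. destruct (Inv _ HR) as [HP|HI].
  - exists [([],true);([],false)]. split.
    + apply rt_step. apply (sstep_comm P' [] true [] false []). exact HP.
    + left; reflexivity.
  - exists P'. split; [apply rt_refl|exact HI].
Qed.

Lemma stuck_final : forall L u v e1 e2 C s',
  Permutation L [(u,e1);(v,e2)] -> stuck u C -> stuck v C ->
  clos_refl_trans lstate lstep (L,C) s' -> s' = (L,C).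
Proof.
  intros L u v e1 e2 C s' HP [k [u' [-> Hk]]] [l [v' [-> Hl]]] H.
  apply clos_rt_rt1n in H. inversion H as [|y z Hs _]; subst; auto.
  exfalso. inversion Hs as [L1 C1 i w e Q HP2 Hi|L1 C1 i w e Q HP2]; subst.
  - assert (HI : In (P i :: w, e) [(P k :: u', e1); (P l :: v', e2)]).
    { eapply Permutation_in; [eapply Permutation_trans; [apply Permutation_sym; exact HP2|exact HP]|].
      left; reflexivity. }
    destruct HI as [HI|[HI|[]]]; inversion HI; subst; congruence.
  - assert (HI : In (T i :: w, e) [(P k :: u', e1); (P l :: v', e2)]).
    { eapply Permutation_in; [eapply Permutation_trans; [apply Permutation_sym; exact HP2|exact HP]|].
      left; reflexivity. }
    destruct HI as [HI|[HI|[]]]; inversion HI.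
Qed.

Lemma word_over_of : forall i j w, i <> j -> nomention j w -> word_over i w.
Proof.
  unfold nomention, word_over. intros i j w Hij H x Hx.
  rewrite forallb_forall in H. specialize (H x Hx).
  apply (other_mention j i); auto.
  destruct (mentions j x); auto.
Qed.

Theorem lemma5p2 (IS : store) (a b : word) :
  correct IS a b ->
  has_blocking_type IS a (Double L1) ->
  has_blocking_type IS b (Double L2) ->
  ((forall B, blocking_prefix IS a B ->
      exists R1 w, word_over L2 w /\ B = R1 ++ P L1 :: w ++ [T L2; P L1]) /\
   (forall B, blocking_prefix IS b B ->
      exists R3 w', word_over L1 w' /\ B = R3 ++ P L2 :: w' ++ [T L1; P L2])) /\
  ((exists u rest, word_over L1 u /\ a = u ++ T L2 :: rest) /\
   (exists u rest, word_over L2 u /\ b = u ++ T L1 :: rest)).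
Proof.
  intros Hc Ha Hb.
  destruct (decomp _ _ _ Ha) as [X1 [X2 [xr [CX [Hx [HCX [HCXi HnX]]]]]]].
  destruct (decomp _ _ _ Hb) as [Y1 [Y2 [yr [CY [Hy [HCY [HCYi HnY]]]]]]].
  set (L0 := [(a,true);(b,false)]).
  assert (Hm : lmust IS L0).
  { destruct (Hc Pr0) as [_ [H _]]. specialize (H smust_Pr0).
    unfold tr_proc, Pr0, tr_sub in H. simpl in H. rewrite !app_nil_r in H. exact H. }
  assert (ND : forall u v C, reach2 L0 IS true false u v C -> stuck u C -> stuck v C -> False).
  { intros u v C [L [HP HR]] Hu Hv. destruct (Hm _ HR) as [s' [Hs' Hsucc]].
    rewrite (stuck_final _ _ _ _ _ _ _ HP Hu Hv Hs') in Hsucc.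
    unfold lsuccessful in Hsucc; simpl in Hsucc.
    apply (Permutation_in _ HP) in Hsucc.
    destruct Hu as [? [? [-> _]]]. destruct Hv as [? [? [-> _]]].
    destruct Hsucc as [H|[H|[]]]; discriminate. }
  assert (ND' : forall u v C, reach2 L0 IS false true u v C -> stuck u C -> stuck v C -> False).
  { intros u v C H Hu Hv. apply reach_swap in H. eapply ND; eauto. }
  assert (St : reach2 L0 IS true false a b IS).
  { exists L0. split; [apply Permutation_refl|apply rt_refl]. }
  assert (St' : reach2 L0 IS false true b a IS) by (apply reach_swap; exact St).
  assert (N12 : L1 <> L2) by discriminate.
  assert (N21 : L2 <> L1) by discriminate.
  destruct (core _ _ _ _ _ _ _ _ N12 St ND _ _ _ _ Hx HCX HnX _ _ _ _ Hy HCY HCYi HnY)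
    as [[w Hw] [u [ra [Hu Hra]]]].
  destruct (core _ _ _ _ _ _ _ _ N21 St' ND' _ _ _ _ Hy HCY HnY _ _ _ _ Hx HCX HCXi HnX)
    as [[w' Hw'] [u' [rb [Hu' Hrb]]]].
  split; split.
  - intros B [B' [k [rest [C [H1 [H2 [H3 H4]]]]]]].
    assert (HB : B' = X1 ++ P L1 :: X2).
    { eapply bp_unique; [| exact H3 | exact H4 | exact HCX | exact HCXi].
      rewrite <- H1. rewrite Hx. rewrite <- app_assoc. reflexivity. }
    assert (Hk : k = L1).
    { rewrite Hx, HB in H1. rewrite <- app_assoc in H1. simpl in H1.
      apply app_inv_head in H1. simpl in H1. injection H1 as H1. apply app_inv_head in H1. injection H1 as H1 _. exact (eq_sym H1). }
    exists X1, w. split.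
    + rewrite Hw in HnX. apply nomention_app in HnX as [HnX _]. eapply word_over_of; eauto.
    + rewrite H2, HB, Hk, Hw. rewrite <- app_assoc. simpl. rewrite <- app_assoc. reflexivity.
  - intros B [B' [k [rest [C [H1 [H2 [H3 H4]]]]]]].
    assert (HB : B' = Y1 ++ P L2 :: Y2).
    { eapply bp_unique; [| exact H3 | exact H4 | exact HCY | exact HCYi].
      rewrite <- H1. rewrite Hy. rewrite <- app_assoc. reflexivity. }
    assert (Hk : k = L2).
    { rewrite Hy, HB in H1. rewrite <- app_assoc in H1. simpl in H1.
      apply app_inv_head in H1. simpl in H1. injection H1 as H1. apply app_inv_head in H1. injection H1 as H1 _. exact (eq_sym H1). }
    exists Y1, w'. split.
    + rewrite Hw' in HnY. apply nomention_app in HnY as [HnY _]. eapply word_over_of; eauto.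
    + rewrite H2, HB, Hk, Hw'. rewrite <- app_assoc. simpl. rewrite <- app_assoc. reflexivity.
  - exists u, ra. split; [eapply word_over_of; eauto|exact Hra].
  - exists u', rb. split; [eapply word_over_of; eauto|exact Hrb].
Qed.
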